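(* Let $g$ be a positive integer, let $l\ge1$, and let $(a,a+g)$ be a consecutive prospective prime pair with gap $g$ in $S_l$. Let $k>l+4$, $0\le m\le P_{k-1}-1$ and $0\le m'\le P_k-1$. Then the number of tuples $(m_{l+1},\dots,m_k)$ of integers with $0\le m_j\le P_j-1$, $m_{k-1}=m$ and $m_k=m'$ such that, with $M=\sum_{j=l+1}^km_jP_{j-1}\#$, both $a+M$ and $a+g+M$ are coprime to $P_k\#$ (i.e. the number of pairs with gap $g$ in the subset $S_k^{(m')}$ generated from the pairs derived from $(a,a+g)$ in the subset $S_{k-1}^{(m)}$) is at least $(P_{k-2}-6)\,\mathring{n}^g_{k-3}$.
   Context: $P_k$ denotes the $k$-th prime ($P_1=2$), $P_k\#=\prod_{i=1}^kP_i$. $S_k=\{N\in\mathbb{N}:5\le N\le4+P_k\#\}$, $S_k^{(m)}=\{N:5+mP_{k-1}\#\le N\le4+(m+1)P_{k-1}\#\}$ for $0\le m\le P_k-1$. A prospective prime in $S_k$ is an $N\in S_k$ coprime to $P_k\#$; prospective primes $a<b$ in $S_k$ are consecutive if no integer strictly between them is coprime to $P_k\#$; a consecutive prospective prime pair with gap $g$ is a pair $(a,a+g)$ of consecutive prospective primes. For $j>l$, $\mathring{n}^g_j=\prod_{i=l+1}^{j}(P_i-2)\prod_{l+1\le i\le j,\,P_i\mid g}\frac{P_i-1}{P_i-2}$. *)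

(* Defs.v *)
From mathcomp Require Import all_boot all_order all_algebra.
Set Implicit Arguments. Unset Strict Implicit. Unset Printing Implicit Defensive.
Import Order.TTheory GRing.Theory Num.Theory.

Lemma exists_prime_above (m : nat) : exists p, (m < p) && prime p.
Proof. by case: (prime_above m) => p H1 H2; exists p; rewrite H1 H2. Qed.

Definition next_prime (m : nat) : nat := ex_minn (exists_prime_above m).

(* P k = k-th prime, P 1 = 2 (P 0 = 1, unused) *)
Definition P (k : nat) : nat := iter k next_prime 1.

Definition primorial (k : nat) : nat := \prod_(1 <= i < k.+1) P i.

Definition prospective (k N : nat) : bool :=
  (5 <= N <= 4 + primorial k) && coprime N (primorial k).

Definition consecutive_pp (k a b : nat) : Prop :=
  [/\ a < b, prospective k a, prospective k b &
      forall n, a < n < b -> ~~ coprime n (primorial k)].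

Definition cpp_pair (k g a : nat) : Prop := consecutive_pp k a (a + g).

Definition nring (l g j : nat) : rat :=
  (\prod_(l.+1 <= i < j.+1) ((P i)%:R - 2))
  * \prod_(l.+1 <= i < j.+1 | P i %| g) (((P i)%:R - 1) / ((P i)%:R - 2)).

(* The tuple is t : 'I_(k-l) -> 'I_(P k)
   with t i standing for m_{l+1+i}. *)
Definition derived_count (l k g a m m' : nat) : nat :=
  #|[set t : {ffun 'I_(k - l) -> 'I_(P k)} |
     [&& [forall i : 'I_(k - l), t i < P (l.+1 + i)],
         [forall i : 'I_(k - l), (l.+1 + i == k.-1) ==> (t i == m :> nat)],
         [forall i : 'I_(k - l), (l.+1 + i == k) ==> (t i == m' :> nat)],
         coprime (a + \sum_(i < k - l) t i * primorial (l + i)) (primorial k) &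
         coprime (a + g + \sum_(i < k - l) t i * primorial (l + i)) (primorial k)]]|.

(* Main.v *)
Require Import Defs.
From mathcomp Require Import all_boot all_order all_algebra.
From mathcomp Require Import zify ring lra.
Import Order.TTheory GRing.Theory Num.Theory.

Lemma next_primeP m : (m < next_prime m) && prime (next_prime m).
Proof. rewrite /next_prime; by case: ex_minnP. Qed.

Lemma PS i : P i.+1 = next_prime (P i).
Proof. by rewrite /P iterS. Qed.

Lemma P_prime {i} : (0 < i)%N -> prime (P i).
Proof. case: i => // i _; rewrite PS; by case/andP: (next_primeP (P i)). Qed.

Lemma P_ltS i : (P i < P i.+1)%N.
Proof. rewrite PS; by case/andP: (next_primeP (P i)). Qed.

Lemma P_lt {i j} : (i < j)%N -> (P i < P j)%N.
Proof.
elim: j => // j IH; rewrite ltnS leq_eqVlt => /orP [/eqP -> | /IH h]; first exact: P_ltS.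
exact: ltn_trans h (P_ltS j).
Qed.

Lemma P_le {i j} : (i <= j)%N -> (P i <= P j)%N.
Proof. rewrite leq_eqVlt => /orP [/eqP -> // | /P_lt h]; exact: ltnW. Qed.

Lemma P_ge3 i : (2 <= i)%N -> (3 <= P i)%N.
Proof.
move=> hi; have h1 : (1 < P 1)%N by apply: prime_gt1; apply: P_prime.
have := @P_le 2 i hi; have := P_ltS 1; lia.
Qed.

Lemma primorialS j : primorial j.+1 = (primorial j * P j.+1)%N.
Proof. by rewrite /primorial big_nat_recr. Qed.

Lemma dvd_primorial i j : (0 < i)%N -> (i <= j)%N -> P i %| primorial j.
Proof.
move=> hi; elim: j => [|j IH]; first by case: i hi.
rewrite leq_eqVlt => /orP [/eqP -> | hij]; rewrite primorialS.
  exact: dvdn_mull.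
by apply: dvdn_mulr; apply: IH.
Qed.

Lemma primorial_dvd i j : (i <= j)%N -> primorial i %| primorial j.
Proof.
elim: j => [|j IH]; first by rewrite leqn0 => /eqP ->.
rewrite leq_eqVlt => /orP [/eqP -> // | hij]; rewrite primorialS.
by apply: dvdn_mulr; apply: IH.
Qed.

Lemma ndvd_primorial i j : (0 < i)%N -> (j < i)%N -> ~~ (P i %| primorial j).
Proof.
move=> hi; have pi := P_prime hi.
elim: j => [|j IH] hj.
  rewrite /primorial big_geq // dvdn1; have := prime_gt1 pi; lia.
rewrite primorialS Euclid_dvdM // negb_or IH ?(ltnW hj) //=.
rewrite (dvdn_prime2 pi (P_prime (ltn0Sn j))).
have := P_lt hj; lia.
Qed.

Lemma coprime_primorialS x j :
  coprime x (primorial j.+1) = coprime x (primorial j) && ~~ (P j.+1 %| x).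
Proof. by rewrite primorialS coprimeMr (coprime_sym x (P _)) (prime_coprime _ (P_prime (ltn0Sn j))). Qed.

Lemma coprime_addmul x d w q : q %| w -> coprime (x + d * w) q = coprime x q.
Proof.
move=> /dvdnP [e ->]; by rewrite -coprime_modl mulnA addnC modnMDl coprime_modl.
Qed.

Section TS.
Variables (N : nat) (B : nat -> pred nat) (w : nat -> nat).

Fixpoint T (n : nat) (f : nat -> nat) : nat :=
  match n with
  | 0 => f 0
  | n'.+1 => T n' (fun M => \sum_(d < N | B n' d) f (M + d * w n'))
  end.

Lemma T_mono n f h : (forall M, f M <= h M) -> T n f <= T n h.
Proof.
elim: n f h => [|n IH] f h fh //=; apply: IH => M; apply: leq_sum => d _; exact: fh.
Qed.

Lemma T_ext n f h : (forall M, f M = h M) -> T n f = T n h.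
Proof.
elim: n f h => [|n IH] f h fh //=; apply: IH => M; apply: eq_bigr => d _; exact: fh.
Qed.

Lemma T_scale n f c : T n (fun M => f M * c) = T n f * c.
Proof.
elim: n f => [|n IH] f //=; rewrite -IH; apply: T_ext => M; by rewrite big_distrl.
Qed.

Definition ext n (t : {ffun 'I_n -> 'I_N}) (x : 'I_N) : {ffun 'I_n.+1 -> 'I_N} :=
  [ffun i => if unlift ord_max i is Some j then t j else x].

Arguments ext {n}.

Lemma cardT n (f : nat -> nat) :
  \sum_(t : {ffun 'I_n -> 'I_N}) ([forall i : 'I_n, B i (t i)] * f (\sum_(i < n) t i * w i)) = T n f.
Proof.
elim: n f => [|n IH] f.
  rewrite (eq_bigr (fun _ => f 0)); last first.
    move=> t _; rewrite big_ord0; have -> : [forall i : 'I_0, B i (t i)].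
      by apply/forallP => -[].
    by rewrite mul1n.
  rewrite sum_nat_const card_ffun card_ord /=.
  by rewrite card_ord expn0 mul1n.
rewrite (reindex (fun p : {ffun 'I_n -> 'I_N} * 'I_N => ext p.1 p.2)) /=; last first.
  exists (fun t : {ffun 'I_n.+1 -> 'I_N} => ([ffun j => t (lift ord_max j)], t ord_max)).
    move=> [t x] _ /=; congr pair.
      by apply/ffunP => j; rewrite !ffunE liftK.
    by rewrite ffunE unlift_none.
  move=> t _ /=; apply/ffunP => i; rewrite ffunE.
  by case: unliftP => [j ->|->] //; rewrite ffunE.
rewrite -(pair_bigA addn (fun t x => [forall i : 'I_n.+1, B i (ext t x i)] * f (\sum_(i < n.+1) ext t x i * w i))).
rewrite -IH; apply: eq_bigr => t _.
rewrite big_distrr /= [RHS]big_mkcond; apply: eq_bigr => x _.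
have E1 : [forall i : 'I_n.+1, B i (ext t x i)] = [forall i : 'I_n, B i (t i)] && B n x.
  apply/forallP/andP.
    move=> h; split; last by have := h ord_max; rewrite ffunE unlift_none.
    by apply/forallP => j; have := h (lift ord_max j); rewrite ffunE liftK lift_max.
  move=> [/forallP h1 h2] i; rewrite ffunE; case: unliftP => [j ->|->] //.
  by rewrite lift_max.
have E2 : \sum_(i < n.+1) ext t x i * w i = \sum_(i < n) t i * w i + x * w n.
  rewrite big_ord_recr /= ffunE unlift_none; congr (_ + _).
  apply: eq_bigr => i _; rewrite ffunE.
  have -> : widen_ord (leqnSn n) i = lift ord_max i by apply: ord_inj; rewrite lift_max.
  by rewrite liftK.
rewrite E1 E2; case: [forall i : 'I_n, B i (t i)]; case: (B n x) => //=; lia.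
Qed.
End TS.

Lemma atmost1 p c w n : prime p -> n <= p -> ~~ (p %| w) ->
  \sum_(d < n) (p %| c + d * w) <= 1.
Proof.
move=> pp np pw.
rewrite (eq_bigr (fun d : 'I_n => if p %| c + d * w then 1 else 0)); last by move=> d _; case: ifP.
rewrite -big_mkcond sum1_card; apply/card_le1_eqP => x y; rewrite !unfold_in /= => hx hy.
wlog xy : x y hx hy / x <= y.
  move=> H; case: (leqP x y) => h; first exact: H.
  symmetry; apply: H => //; exact: ltnW.
apply: ord_inj; apply/eqP; rewrite eqn_leq xy /=; apply/negP => lt.
have : p %| (c + y * w) - (c + x * w) by apply: dvdn_sub.
rewrite subnDl -mulnBl Euclid_dvdM // (negbTE pw) orbF => /dvdn_leq.
have := ltn_ord y; lia.
Qed.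

Lemma sieve n w (L : seq (nat * nat)) :
  (forall x, x \in L -> [/\ prime x.1, n <= x.1 & ~~ (x.1 %| w)]) ->
  n <= \sum_(d < n) all (fun x => ~~ (x.1 %| x.2 + d * w)) L + size L.
Proof.
elim: L => [|x L IH] H.
  rewrite (eq_bigr (fun _ => 1)) // sum_nat_const card_ord; lia.
have [p1 p2 p3] := H x (mem_head _ _).
have := IH (fun y hy => H y (@mem_behead _ (x :: L) y hy)).
have := atmost1 _ x.2 w _ p1 p2 p3.
have : \sum_(d < n) all (fun x0 => ~~ (x0.1 %| x0.2 + d * w)) L <=
       \sum_(d < n) all (fun x0 => ~~ (x0.1 %| x0.2 + d * w)) (x :: L) + \sum_(d < n) (x.1 %| x.2 + d * w).
  rewrite -big_split /=; apply: leq_sum => d _ /=.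
  by case: (x.1 %| _); case: all.
rewrite /=; lia.
Qed.

Lemma sum_pick N (Pr : pred nat) x (hx : (x < N)%N) (F : nat -> nat) :
  (forall d, Pr d = (d == x)) -> (\sum_(d < N | Pr d) F d = F x)%N.
Proof.
move=> H; rewrite (big_pred1 (Ordinal hx)) // => d; by rewrite /= H -val_eqE.
Qed.

Lemma T3 N B w n f : T N B w n.+3 f = T N B w n (fun M => \sum_(d < N | B n d)
   \sum_(d' < N | B n.+1 d') \sum_(d'' < N | B n.+2 d'') f (M + d * w n + d' * w n.+1 + d'' * w n.+2))%N.
Proof. by []. Qed.

Section Main.
Variables (g l a k m m' : nat).

Definition G (j x : nat) : bool :=
  coprime (a + x) (primorial j) && coprime (a + g + x) (primorial j).

Definition nn (j : nat) : nat :=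
  \prod_(l.+1 <= i < j.+1) (if P i %| g then (P i).-1 else (P i - 2)).

Definition Bd (i : nat) : pred nat := fun d =>
  if l.+1 + i == k then d == m' else if l.+1 + i == k.-1 then d == m else d < P (l.+1 + i).

Definition wt (i : nat) : nat := primorial (l + i).

Lemma G_shift j x d v : primorial j %| v -> G j (x + d * v) = G j x.
Proof. move=> h; by rewrite /G !addnA !coprime_addmul. Qed.

Lemma GS j x : G j.+1 x = [&& G j x, ~~ (P j.+1 %| a + x) & ~~ (P j.+1 %| a + g + x)].
Proof.
rewrite /G !coprime_primorialS.
by case: (coprime (a + x) _); case: (coprime (a + g + x) _); case: (P _ %| _); case: (P _ %| _).
Qed.

Lemma lower_step j : (1 <= l)%N -> (l + j.+1 <= k - 3)%N -> forall M,
  (G (l + j) M * (if P (l + j).+1 %| g then (P (l+j).+1).-1 else (P (l+j).+1 - 2))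
   <= \sum_(d < P k | Bd j d) G (l + j).+1 (M + d * wt j))%N.
Proof.
move=> hl hj M.
case hG: (G (l + j) M); last by rewrite mul0n.
rewrite mul1n.
set p := P (l + j).+1.
have pp : prime p by apply: P_prime.
have pk : (p <= P k)%N by apply: P_le; lia.
have pw : ~~ (p %| wt j) by apply: ndvd_primorial; lia.
rewrite (eq_bigl (fun d : 'I_(P k) => d < p)); last first.
  move=> d; rewrite /Bd /p; have -> : (l.+1 + j == k) = false by apply/negbTE; lia.
  by have -> : (l.+1 + j == k.-1) = false by apply/negbTE; lia.
rewrite (big_ord_narrow pk) /=.
case: ifP => pg.
- have := sieve p (wt j) [:: (p, a + M)] _.
  have -> : \sum_(i < p) G (l + j).+1 (M + i * wt j) =
            \sum_(d < p) all (fun x => ~~ (x.1 %| x.2 + d * wt j)) [:: (p, a + M)].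
    apply: eq_bigr => d _; rewrite GS G_shift ?dvdnn // hG /= andbT.
    have -> : a + g + (M + d * wt j) = (a + M + d * wt j) + g by lia.
    rewrite (dvdn_addl _ pg) -addnA; by case: (p %| _).
  move=> /= H; have : (p <= \sum_(d < p) (~~ (p %| a + M + d * wt j) && true) + 1)%N.
    apply: H => x; rewrite inE => /eqP -> /=; split => //.
  by rewrite -subn1 leq_subLR addnC.
- have := sieve p (wt j) [:: (p, a + M); (p, a + g + M)] _.
  have -> : \sum_(i < p) G (l + j).+1 (M + i * wt j) =
            \sum_(d < p) all (fun x => ~~ (x.1 %| x.2 + d * wt j)) [:: (p, a + M); (p, a + g + M)].
    apply: eq_bigr => d _; rewrite GS G_shift ?dvdnn // hG /= andbT !addnA //.
  move=> /= H; have : (p <= \sum_(d < p) [&& ~~ (p %| a + M + d * wt j), ~~ (p %| a + g + M + d * wt j) & true] + 2)%N.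
    apply: H => x; rewrite !inE => /orP [] /eqP -> /=; split => //.
  by rewrite leq_subLR addnC.
Qed.

Lemma lower j : (1 <= l)%N -> (l + j <= k - 3)%N -> G l 0 ->
  (nn (l + j) <= T (P k) Bd wt j (fun M => G (l + j) M))%N.
Proof.
move=> hl; elim: j => [|j IH] hj hG0.
  rewrite addn0 /= hG0 /nn big_geq //.
rewrite addnS /nn big_nat_recr /=; last by lia.
rewrite -/(nn (l + j)).
apply: leq_trans (_ : (nn (l + j) * (if P (l + j).+1 %| g then (P (l+j).+1).-1 else (P (l+j).+1 - 2))
   <= T (P k) Bd wt j (fun M => G (l + j) M * (if P (l + j).+1 %| g then (P (l+j).+1).-1 else (P (l+j).+1 - 2))))%N) _.
  rewrite T_scale leq_mul2r IH ?orbT //; lia.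
apply: T_mono => M; apply: lower_step => //; lia.
Qed.

Lemma top_step j0 : k = (l + j0).+3 -> (m < P k.-1)%N -> (m' < P k)%N -> forall M,
  (G (l + j0) M * (P (l + j0).+1 - 6) <= \sum_(d < P k | Bd j0 d)
   \sum_(d' < P k | Bd j0.+1 d') \sum_(d'' < P k | Bd j0.+2 d'') G k (M + d * wt j0 + d' * wt j0.+1 + d'' * wt j0.+2))%N.
Proof.
move=> hk hm0 hm' M.
have hm : (m < P k)%N by apply: leq_trans hm0 _; apply: P_le; lia.
set q := l + j0.
have E : forall M', (\sum_(d' < P k | Bd j0.+1 d') \sum_(d'' < P k | Bd j0.+2 d'') G k (M' + d' * wt j0.+1 + d'' * wt j0.+2)
   = G k (M' + m * wt j0.+1 + m' * wt j0.+2))%N.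
  move=> M'.
  rewrite (sum_pick _ _ _ hm (fun x => \sum_(d'' < P k | Bd j0.+2 d'') G k (M' + x * wt j0.+1 + d'' * wt j0.+2))%N); last first.
    move=> d; rewrite /Bd; have -> : (l.+1 + j0.+1 == k) = false by apply/negbTE; lia.
    by have -> : (l.+1 + j0.+1 == k.-1) by apply/eqP; lia.
  rewrite (sum_pick _ _ _ hm' (fun x => G k (M' + m * wt j0.+1 + x * wt j0.+2))) //.
  move=> d; rewrite /Bd; by have -> : (l.+1 + j0.+2 == k) by apply/eqP; lia.
rewrite (eq_bigr _ (fun (d : 'I_(P k)) _ => E (M + d * wt j0))).
have pk : (P q.+1 <= P k)%N by apply: P_le; lia.
rewrite (eq_bigl (fun d : 'I_(P k) => d < P q.+1)); last first.
  move=> d; rewrite /Bd; have -> : (l.+1 + j0 == k) = false by apply/negbTE; lia.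
  have -> : (l.+1 + j0 == k.-1) = false by apply/negbTE; lia.
  by rewrite addSn.
rewrite (big_ord_narrow pk) /=.
case hG: (G q M); last by rewrite mul0n.
rewrite mul1n.
set c1 := a + M + m * wt j0.+1 + m' * wt j0.+2.
set c2 := a + g + M + m * wt j0.+1 + m' * wt j0.+2.
set L := [:: (P q.+1, c1); (P q.+1, c2); (P q.+2, c1); (P q.+2, c2); (P q.+3, c1); (P q.+3, c2)].
have -> : (\sum_(i < P q.+1) G k (M + i * wt j0 + m * wt j0.+1 + m' * wt j0.+2) =
     \sum_(d < P q.+1) all (fun x => ~~ (x.1 %| x.2 + d * wt j0)) L)%N.
  apply: eq_bigr => d _.
  have hq : forall x v, primorial q %| v -> G q (x + v) = G q x.
    move=> x v hv; rewrite -(muln1 v) mulnC; exact: G_shift.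
  rewrite hk !GS !hq ?hG; first last.
  - apply: dvdn_mull; apply: primorial_dvd; lia.
  - apply: dvdn_mull; apply: primorial_dvd; lia.
  - apply: dvdn_mull; apply: primorial_dvd; lia.
  have -> : a + (M + d * wt j0 + m * wt j0.+1 + m' * wt j0.+2) = c1 + d * wt j0 by rewrite /c1; lia.
  have -> : a + g + (M + d * wt j0 + m * wt j0.+1 + m' * wt j0.+2) = c2 + d * wt j0 by rewrite /c2; lia.
  rewrite /L /=.
  by case: (P q.+1 %| c1 + _); case: (P q.+1 %| c2 + _); case: (P q.+2 %| c1 + _);
     case: (P q.+2 %| c2 + _); case: (P q.+3 %| c1 + _); case: (P q.+3 %| c2 + _).
have := sieve (P q.+1) (wt j0) L.
have H : forall x, x \in L -> [/\ prime x.1, (P q.+1 <= x.1)%N & ~~ (x.1 %| wt j0)].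
  have H1 : forall i, (q.+1 <= i)%N -> [/\ prime (P i), (P q.+1 <= P i)%N & ~~ (P i %| wt j0)].
    move=> i hi; split; first by apply: P_prime; lia.
      exact: P_le.
    apply: ndvd_primorial; rewrite /q in hi; lia.
  move=> x; rewrite /L !inE.
  do 5 (case/orP; [move/eqP -> ; apply: H1; lia | ]).
  move/eqP ->; apply: H1; lia.
move=> /(_ H) h. by rewrite leq_subLR addnC.
Qed.

End Main.

Lemma count_eq l k g a m m' : (0 < k)%N -> (m < P k.-1)%N -> (m' < P k)%N ->
  derived_count l k g a m m' = T (P k) (Bd l k m m') (wt l) (k - l) (fun M => G g a k M).
Proof.
move=> k0 hm hm'.
rewrite -cardT /derived_count cardsE -sum1_card big_mkcond /=.
apply: eq_bigr => t _; rewrite unfold_in /=.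
have HB : [&& [forall i : 'I_(k - l), t i < P (l.+1 + i)],
         [forall i : 'I_(k - l), (l.+1 + i == k.-1) ==> (t i == m :> nat)]
       & [forall i : 'I_(k - l), (l.+1 + i == k) ==> (t i == m' :> nat)]] =
       [forall i : 'I_(k - l), Bd l k m m' i (t i)].
  apply/idP/idP.
    move/and3P => [/forallP h1 /forallP h2 /forallP h3]; apply/forallP => i; rewrite /Bd.
    case: ifP => e1; first exact: (implyP (h3 i) e1).
    case: ifP => e2; first exact: (implyP (h2 i) e2).
    exact: h1.
  move/forallP => h; apply/and3P; split; apply/forallP => i; have := h i; rewrite /Bd.
  - case: ifP => [/eqP -> /eqP -> // | _].
    by case: ifP => [/eqP -> /eqP -> // | _].
  - case: ifP => [/eqP e1 _ | _]; first by apply/implyP => /eqP; lia.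
    by case: ifP => [_ /eqP -> | _ _]; rewrite ?eqxx.
  - by case: ifP => [_ /eqP -> | _ _]; rewrite ?eqxx ?implyTb.
rewrite -HB /G /wt.
by case: [forall i : 'I_(k - l), _ < _]; case: [forall i : 'I_(k - l), _ ==> (_ == m)];
  case: [forall i : 'I_(k - l), _ ==> (_ == m')]; case: coprime; case: coprime.
Qed.


Lemma main_nat {g l a k m m' : nat} :
  (1 <= l) -> cpp_pair l g a ->
  (l + 4 < k) -> (m < P k.-1) -> (m' < P k) ->
  (P (k - 2) - 6) * nn g l (k - 3) <= derived_count l k g a m m'.
Proof.
move=> hl cpp hk hm1 hm1'.
set j0 := k - l - 3.
have hkj : k = (l + j0).+3 by rewrite /j0; lia.
have hG0 : G g a l 0.
  case: cpp => _ /andP [_ c1] /andP [_ c2] _; by rewrite /G !addn0 c1 c2.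
rewrite count_eq //; last by lia.
have -> : k - l = j0.+3 by rewrite /j0; lia.
rewrite T3.
apply: leq_trans (_ : _ <= T (P k) (Bd l k m m') (wt l) j0 (fun M => G g a (l + j0) M * (P (l + j0).+1 - 6))) _.
  rewrite T_scale mulnC.
  have -> : k - 3 = l + j0 by rewrite /j0; lia.
  have -> : k - 2 = (l + j0).+1 by rewrite /j0; lia.
  apply: leq_mul => //; apply: lower => //; rewrite /j0; lia.
apply: T_mono => M; exact: top_step.
Qed.

Local Open Scope ring_scope.

Lemma nring_eq l g j : (1 <= l)%N -> nring l g j = (nn g l j)%:R.
Proof.
move=> hl; rewrite /nring /nn natr_prod (big_mkcond (fun i => (P i %| g)%N)) -big_split /=.
apply: eq_big_nat => i /andP [hi _].
have h3 : (3 <= P i)%N by apply: P_ge3; lia.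
have h2 : ((P i)%:R - 2 : rat) != 0.
  apply/eqP => e; have : (3%:R <= (P i)%:R :> rat) by rewrite ler_nat.
  lra.
case: ifP => _; last by rewrite mulr1 natrB //; lia.
rewrite mulrC divfK // -subn1 natrB //; lia.
Qed.

Theorem lemma6 (g l a k m m' : nat) :
  (0 < g)%N -> (1 <= l)%N -> cpp_pair l g a ->
  (l + 4 < k)%N -> (m <= P k.-1 - 1)%N -> (m' <= P k - 1)%N ->
  ((P (k - 2))%:R - 6) * nring l g (k - 3) <= (derived_count l k g a m m')%:R :> rat.
Proof.
move=> g0 hl cpp hk hm hm'.
have hm1 : (m < P k.-1)%N by have := prime_gt1 (@P_prime k.-1 ltac:(lia)); lia.
have hm1' : (m' < P k)%N by have := prime_gt1 (@P_prime k ltac:(lia)); lia.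
have Hc := main_nat hl cpp hk hm1 hm1'. 
rewrite nring_eq //.
apply: le_trans (_ : (((P (k - 2) - 6) * nn g l (k - 3))%N)%:R <= _); last by rewrite ler_nat.
rewrite natrM; apply: ler_wpM2r; first exact: ler0n.
case: (leqP 6 (P (k - 2))) => h6; first by rewrite natrB.
have : ((P (k - 2))%:R <= 5%:R :> rat) by rewrite ler_nat; lia.
have := ler0n rat (P (k - 2) - 6).
lra.
Qed.
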